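(* Let $S,T$ be left semi-braces whose associated maps $r_S$ and $r_T$ are solutions. Let $\sigma:T\to\mathrm{Aut}(S)$ be a homomorphism from $(T,\cdot)$ into the automorphism group of $(S,+,\cdot)$ (write ${}^ua=\sigma(u)(a)$), and $\delta:S\to\mathrm{End}(T)$ an anti-homomorphism from $(S,+)$ into the endomorphism semigroup of $(T,+)$ (write $u^a=\delta(a)(u)$) with $(uv)^{\lambda_a({}^ub)}+u((u^{-1})^b+w)=u(v^b+w)$ for all $a,b\in S$, $u,v,w\in T$; let $B$ be the double semidirect product $S\times T$ with $(a,u)+(b,v)=(a+b,u^b+v)$, $(a,u)(b,v)=(a\,{}^ub,uv)$. If (1) $(u^{1})^a=u^a$ and (2) $1^a+u=1+u$ for all $a\in S$ and $u\in T$ (where in (1) $1$ is the identity of $(S,\cdot)$ and in (2) $1$ is the identity of $(T,\cdot)$), then the map $r_B$ associated to $B$ is a solution.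
   Context: A left semi-brace is a triple $(S,+,\cdot)$ such that $(S,+)$ is a semigroup, $(S,\cdot)$ is a group with identity $1$, and $a(b+c)=ab+a(a^{-1}+c)$ for all $a,b,c$. Set $\lambda_a(b)=a(a^{-1}+b)$, $\rho_b(a)=(a^{-1}+b)^{-1}b$; the map associated to $X$ is $r_X(x,y)=(\lambda_x(y),\rho_y(x))$. A solution is a map $r:X\times X\to X\times X$ with $(r\times\mathrm{id})(\mathrm{id}\times r)(r\times\mathrm{id})=(\mathrm{id}\times r)(r\times\mathrm{id})(\mathrm{id}\times r)$. An automorphism of $(S,+,\cdot)$ is a bijection preserving both operations. That $\delta$ is an anti-homomorphism from $(S,+)$ means $u^{a+b}=(u^a)^b$. *)

(* Defs.v *)
Set Implicit Arguments.

Record is_left_semibrace (S : Type) (add mul : S -> S -> S) (inv : S -> S)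
    (one : S) : Prop := {
  sb_addA : forall a b c, add a (add b c) = add (add a b) c;
  sb_mulA : forall a b c, mul a (mul b c) = mul (mul a b) c;
  sb_mul1 : forall a, mul a one = a;
  sb_1mul : forall a, mul one a = a;
  sb_mulV : forall a, mul a (inv a) = one;
  sb_Vmul : forall a, mul (inv a) a = one;
  sb_distr : forall a b c,
      mul a (add b c) = add (mul a b) (mul a (add (inv a) c))
}.

Definition lam (S : Type) (add mul : S -> S -> S) (inv : S -> S) (a b : S) : S :=
  mul a (add (inv a) b).

Definition rho (S : Type) (add mul : S -> S -> S) (inv : S -> S) (b a : S) : S :=
  mul (inv (add (inv a) b)) b.

Definition assoc_map (S : Type) (add mul : S -> S -> S) (inv : S -> S)
    (p : S * S) : S * S :=
  (lam add mul inv (fst p) (snd p), rho add mul inv (snd p) (fst p)).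

(* Set-theoretic solution of the Yang-Baxter equation:
   (r x id)(id x r)(r x id) = (id x r)(r x id)(id x r). *)
Definition r12 (X : Type) (r : X * X -> X * X) (t : X * X * X) : X * X * X :=
  let '(x, y, z) := t in let '(x', y') := r (x, y) in (x', y', z).
Definition r23 (X : Type) (r : X * X -> X * X) (t : X * X * X) : X * X * X :=
  let '(x, y, z) := t in let '(y', z') := r (y, z) in (x, y', z').
Definition is_solution (X : Type) (r : X * X -> X * X) : Prop :=
  forall t : X * X * X,
    r12 r (r23 r (r12 r t)) = r23 r (r12 r (r23 r t)).

Definition is_automorphism (S : Type) (add mul : S -> S -> S) (f : S -> S) : Prop :=
  (exists g : S -> S, (forall x, g (f x) = x) /\ (forall x, f (g x) = x)) /\
  (forall a b, f (add a b) = add (f a) (f b)) /\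
  (forall a b, f (mul a b) = mul (f a) (f b)).

Section DSP.
Variables (S T : Type) (addS mulS : S -> S -> S) (invS : S -> S)
          (addT mulT : T -> T -> T) (invT : T -> T)
          (sigma : T -> S -> S) (delta : S -> T -> T).
Definition addB (x y : S * T) : S * T :=
  (addS (fst x) (fst y), addT (delta (fst y) (snd x)) (snd y)).
Definition mulB (x y : S * T) : S * T :=
  (mulS (fst x) (sigma (snd x) (fst y)), mulT (snd x) (snd y)).
Definition invB (x : S * T) : S * T :=
  (sigma (invT (snd x)) (invS (fst x)), invT (snd x)).
End DSP.

(* Main.v *)
Require Import Defs.
From Stdlib Require Import Setoid.

Section SB.
Variables (X : Type) (add mul : X -> X -> X) (inv : X -> X) (one : X).
Hypothesis HX : is_left_semibrace add mul inv one.

Local Notation "a + b" := (add a b).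
Local Notation "a * b" := (mul a b).
Local Notation lm := (lam add mul inv).
Local Notation rh := (rho add mul inv).

Lemma mA a b c : a * (b * c) = (a * b) * c. Proof. apply (sb_mulA HX). Qed.
Lemma aA a b c : a + (b + c) = (a + b) + c. Proof. apply (sb_addA HX). Qed.
Lemma m1 a : a * one = a. Proof. apply (sb_mul1 HX). Qed.
Lemma m1l a : one * a = a. Proof. apply (sb_1mul HX). Qed.
Lemma mV a : a * inv a = one. Proof. apply (sb_mulV HX). Qed.
Lemma Vm a : inv a * a = one. Proof. apply (sb_Vmul HX). Qed.
Lemma dst a b c : a * (b + c) = a * b + lm a c. Proof. apply (sb_distr HX). Qed.

Lemma mVK w a : (w * a) * inv a = w. Proof. rewrite <- mA, mV, m1; reflexivity. Qed.
Lemma VmK w a : (w * inv a) * a = w. Proof. rewrite <- mA, Vm, m1; reflexivity. Qed.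
Lemma cancel_l a b c : a * b = a * c -> b = c.
Proof. intro E. rewrite <- (m1l b), <- (m1l c), <- (Vm a), <- !mA, E; reflexivity. Qed.
Lemma cancel_r a b c : b * a = c * a -> b = c.
Proof. intro E. rewrite <- (mVK b a), <- (mVK c a), E; reflexivity. Qed.
Lemma inv_one : inv one = one.
Proof. rewrite <- (m1l (inv one)). apply mV. Qed.
Lemma inv_inv a : inv (inv a) = a.
Proof. apply (cancel_l (inv a)). rewrite mV, Vm; reflexivity. Qed.
Lemma inv_mul a b : inv (a * b) = inv b * inv a.
Proof. apply (cancel_l (a * b)). rewrite mV, mA, <- (mA a b), mV, m1, mV; reflexivity. Qed.
Lemma inv_uniq a b : a * b = one -> b = inv a.
Proof. intro E; apply (cancel_l a); rewrite mV; exact E. Qed.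

Lemma lamE a b : lm a b = a * (inv a + b). Proof. reflexivity. Qed.
Lemma K0 b c : b + c = b + (one + c).
Proof. pose proof (dst one b c) as E. rewrite !m1l in E. unfold lam in E.
  rewrite inv_one, m1l in E. exact E. Qed.
Lemma lam_one c : lm one c = one + c.
Proof. unfold lam; rewrite inv_one, m1l; reflexivity. Qed.
Lemma lam_mul a b c : lm (a * b) c = lm a (lm b c).
Proof. unfold lam. rewrite inv_mul, <- mA, dst, mA, mV, m1l. reflexivity. Qed.
Lemma lam_add a b c : lm a (b + c) = lm a b + lm a c.
Proof. unfold lam at 1. rewrite aA, dst. reflexivity. Qed.
Lemma psi_lam a b : one + lm a b = lm a b.
Proof. rewrite <- lam_one, <- lam_mul, m1l; reflexivity. Qed.
Lemma lam_psi a b : lm a (one + b) = lm a b.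
Proof. rewrite <- lam_one, <- lam_mul, m1; reflexivity. Qed.
Lemma add_eq x e : x + e = x * lm (inv x) e.
Proof. unfold lam. rewrite inv_inv, mA, mV, m1l; reflexivity. Qed.
Lemma one_one : one + one = one.
Proof.
  assert (E3 : one + one + one = one + one).
  { rewrite <- aA. symmetry. apply K0. }
  assert (E4 : (one + one) + (one + one) = one + one).
  { rewrite aA, E3, E3. reflexivity. }
  rewrite add_eq in E4.
  assert (L : lm (inv (one + one)) (one + one) = one).
  { apply (cancel_l (one + one)). rewrite m1. exact E4. }
  pose proof (psi_lam (inv (one + one)) (one + one)) as P.
  rewrite L in P. exact P.
Qed.
Lemma lam_rho a b : lm a b * rh b a = a * b.
Proof. unfold lam, rho. rewrite mA, mVK. reflexivity. Qed.
Lemma mul_one_add y z : y * (one + z) = y + lm y z.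
Proof. rewrite dst, m1; reflexivity. Qed.

Lemma y_inv_rho x y : y * inv (rh y x) = inv x + y.
Proof. unfold rho. rewrite inv_mul, inv_inv, mA, mV, m1l. reflexivity. Qed.

Lemma first_eq x y z : lm (lm x y) (lm (rh y x) z) = lm x (lm y z).
Proof. rewrite <- lam_mul, lam_rho, lam_mul. reflexivity. Qed.

Lemma midL x y z :
  lm x (lm y z) * rh (lm (rh y x) z) (lm x y) = lm x (one + y * (one + z)).
Proof.
  rewrite <- first_eq, lam_rho, (lamE (rh y x) z), mA, lam_rho, <- mA, dst,
    y_inv_rho, <- aA, <- lamE, lam_psi, mul_one_add. reflexivity.
Qed.

Lemma midR x y z :
  lm x (lm y z) * lm (rh (lm y z) x) (rh z y)
  = lm x (one + lm y z * (one + rh z y)).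
Proof.
  rewrite (lamE (rh (lm y z) x)), mA, lam_rho, <- mA, dst, y_inv_rho, <- aA,
    <- lamE, lam_psi, mul_one_add. reflexivity.
Qed.

Definition EC := forall y z, one + y * (one + z) = one + lm y z * (one + rh z y).
Definition QC := forall t b, one + t * (one + b) = one + t * b.

Lemma psi_psi w : one + (one + w) = one + w.
Proof. rewrite aA, one_one. reflexivity. Qed.

Lemma YBE_E : is_solution (assoc_map add mul inv) -> EC.
Proof.
  intros sol y z. specialize (sol (one, y, z)). cbn in sol.
  injection sol as E1 E2 E3.
  pose proof (midL one y z) as L. pose proof (midR one y z) as R.
  rewrite E2, R, !lam_one, !psi_psi in L. symmetry; exact L.
Qed.

Lemma Q_YBE : QC -> is_solution (assoc_map add mul inv).
Proof.
  intros Q [[x y] z]. cbn.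
  assert (Hf := first_eq x y z).
  assert (Hm : rh (lm (rh y x) z) (lm x y) = lm (rh (lm y z) x) (rh z y)).
  { apply (cancel_l (lm x (lm y z))). rewrite midL, midR, !Q, lam_rho. reflexivity. }
  f_equal; [f_equal; assumption |].
  apply (cancel_l (lm x (lm y z) * lm (rh (lm y z) x) (rh z y))).
  assert (R : lm x (lm y z) * lm (rh (lm y z) x) (rh z y) * rh (rh z y) (rh (lm y z) x)
     = x * (y * z)).
  { rewrite <- mA, lam_rho, mA, lam_rho, <- mA, lam_rho. reflexivity. }
  assert (L : lm (lm x y) (lm (rh y x) z) * rh (lm (rh y x) z) (lm x y) * rh z (rh y x)
     = x * (y * z)).
  { rewrite lam_rho, <- mA, lam_rho, mA, lam_rho, mA. reflexivity. }
  rewrite R, <- L, Hf, Hm. reflexivity.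
Qed.

Definition inH e := one + e = e.
Definition inK k := one + k = one.

Section QE.
Hypothesis E : EC.

Lemma H_lam a b : inH (lm a b). Proof. apply psi_lam. Qed.
Lemma H_psi w : inH (one + w). Proof. apply psi_psi. Qed.
Lemma H_pref p s : inH p -> one + p * (one + s) = p * (one + s).
Proof. intro Hp. rewrite mul_one_add, aA, Hp. reflexivity. Qed.

Lemma K1 z : inK (inv (one + z) * z).
Proof.
  pose proof (E one z) as e. rewrite m1l, psi_psi, lam_one in e.
  rewrite H_pref in e by apply H_psi.
  unfold rho in e. rewrite inv_one in e.
  unfold inK. symmetry. apply (cancel_l (one + z)). rewrite m1. exact e.
Qed.

Lemma F1 k : inK k -> lm k one = one.
Proof.
  intro Hk. pose proof (mul_one_add k one) as e.
  rewrite one_one, m1 in e.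
  assert (e2 : one + k = one + (k + lm k one)) by (rewrite <- e; reflexivity).
  rewrite aA, Hk, psi_lam in e2. symmetry. exact e2.
Qed.

Lemma lam_K a k : inK k -> lm a k = lm a one.
Proof. intro Hk. rewrite <- lam_psi, Hk. reflexivity. Qed.

Lemma F1' k : inK k -> lm (inv k) one = one.
Proof.
  intro Hk. rewrite <- (F1 k Hk) at 1. rewrite <- lam_mul, Vm, lam_one, one_one.
  reflexivity.
Qed.

Lemma K2 k k' : inK k -> inK k' -> inK (k * k').
Proof.
  intros Hk Hk'. pose proof (E k k') as e.
  rewrite Hk', m1, Hk in e.
  assert (P : lm k k' = one) by (rewrite lam_K by exact Hk'; apply F1; exact Hk).
  assert (S : rh k' k = k * k') by (rewrite <- lam_rho, P, m1l; reflexivity).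
  rewrite P, S, m1l, psi_psi in e. unfold inK. symmetry. exact e.
Qed.

Lemma K3 k : inK k -> inK (inv k).
Proof.
  intros Hk. pose proof (E (inv k) k) as e.
  rewrite Hk, m1 in e.
  assert (P : lm (inv k) k = one) by (rewrite lam_K by exact Hk; apply F1'; exact Hk).
  assert (S : rh k (inv k) = one).
  { apply (cancel_l one). rewrite <- P at 1. rewrite lam_rho, Vm, m1. reflexivity. }
  rewrite P, S, m1l, one_one, one_one in e. exact e.
Qed.

Lemma H_mul d e : inH d -> inH e -> inH (d * e).
Proof.
  intros Hd He. unfold inH in *. rewrite <- He at 1 2. apply H_pref. exact Hd.
Qed.

Lemma HK x : inH x -> inK x -> x = one.
Proof. intros H1 H2. rewrite <- H1. exact H2. Qed.

Lemma H_inv e : inH e -> inH (inv e).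
Proof.
  intro He.
  set (A := one + inv e).
  assert (HA : inH A) by apply H_psi.
  assert (Hk0 : inK (inv A * inv e)) by apply K1.
  assert (C : (e * A) * (inv A * inv e) = one) by (rewrite mA, mVK, mV; reflexivity).
  assert (EA : e * A = inv (inv A * inv e)).
  { apply (cancel_r (inv A * inv e)). rewrite C, Vm. reflexivity. }
  assert (EA1 : e * A = one).
  { apply HK. apply H_mul; assumption. rewrite EA. apply K3. exact Hk0. }
  assert (A = inv e) by (apply inv_uniq; exact EA1).
  unfold inH. fold A. exact H.
Qed.

Lemma Pprop d k : inH d -> inK k -> one + d * k = d.
Proof.
  intros Hd Hk.
  set (d' := one + d * k).
  assert (Hd' : inH d') by apply H_psi.
  assert (Hk' : inK (inv d' * (d * k))) by apply K1.
  assert (X0 : inv d' * d = (inv d' * (d * k)) * inv k) by (rewrite mA, mVK; reflexivity).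
  assert (X1 : inv d' * d = one).
  { apply HK. apply H_mul; [apply H_inv; exact Hd' | exact Hd].
    rewrite X0. apply K2; [exact Hk' | apply K3; exact Hk]. }
  symmetry. apply inv_uniq in X1. rewrite inv_inv in X1. exact X1.
Qed.

Lemma E_Q : QC.
Proof.
  intros t b.
  set (x := t * (one + b)).
  set (k := inv (one + b) * b).
  assert (Hk : inK k) by apply K1.
  assert (Tb : t * b = x * k) by (unfold x, k; rewrite mA, mVK; reflexivity).
  set (d := one + x).
  assert (Hd : inH d) by apply H_psi.
  assert (Hc : inK (inv d * x)) by apply K1.
  assert (Xk : x * k = d * ((inv d * x) * k)) by (rewrite !mA, mV, m1l; reflexivity).
  rewrite Tb, Xk, Pprop; [reflexivity | exact Hd | apply K2; assumption].
Qed.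
End QE.

Lemma YBE_Q : is_solution (assoc_map add mul inv) -> QC.
Proof. intro s. apply E_Q. apply YBE_E. exact s. Qed.

End SB.
Arguments mA {X add mul inv one} HX a b c.
Arguments aA {X add mul inv one} HX a b c.
Arguments m1 {X add mul inv one} HX a.
Arguments m1l {X add mul inv one} HX a.
Arguments mV {X add mul inv one} HX a.
Arguments Vm {X add mul inv one} HX a.
Arguments cancel_l {X add mul inv one} HX a b c _.
Arguments inv_uniq {X add mul inv one} HX a b _.
Arguments Q_YBE {X add mul inv one} HX _ _.
Arguments YBE_Q {X add mul inv one} HX _ _ _.

Theorem theorem43
  (S T : Type)
  (addS mulS : S -> S -> S) (invS : S -> S) (oneS : S)
  (addT mulT : T -> T -> T) (invT : T -> T) (oneT : T)
  (HS : is_left_semibrace addS mulS invS oneS)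
  (HT : is_left_semibrace addT mulT invT oneT)
  (solS : is_solution (assoc_map addS mulS invS))
  (solT : is_solution (assoc_map addT mulT invT))
  (sigma : T -> S -> S) (delta : S -> T -> T)
  (* sigma : (T,.) -> Aut(S,+,.) is a homomorphism *)
  (sigma_aut : forall u, is_automorphism addS mulS (sigma u))
  (sigma_hom : forall u v a, sigma (mulT u v) a = sigma u (sigma v a))
  (* delta : (S,+) -> End(T,+) is an anti-homomorphism *)
  (delta_end : forall a u v, delta a (addT u v) = addT (delta a u) (delta a v))
  (delta_anti : forall a b u, delta (addS a b) u = delta b (delta a u))
  (* compatibility condition *)
  (compat : forall (a b : S) (u v w : T),
      addT (delta (lam addS mulS invS a (sigma u b)) (mulT u v))
           (mulT u (addT (delta b (invT u)) w))
      = mulT u (addT (delta b v) w))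
  (* (1) (u^1)^a = u^a *)
  (H1 : forall a u, delta a (delta oneS u) = delta a u)
  (* (2) 1^a + u = 1 + u *)
  (H2 : forall a u, addT (delta a oneT) u = addT oneT u) :
  is_solution
    (assoc_map (addB addS addT delta) (mulB mulS mulT sigma) (invB invS invT sigma)).
Proof.
  assert (s1 : forall u, sigma u oneS = oneS).
  { intro u. destruct (sigma_aut u) as [_ [_ Hm]].
    apply (cancel_l HS (sigma u oneS)). rewrite <- Hm, !(m1 HS). reflexivity. }
  assert (sid : forall b, sigma oneT b = b).
  { intro b. destruct (sigma_aut oneT) as [[g [Hg _]] _].
    assert (E : sigma oneT (sigma oneT b) = sigma oneT b)
      by (rewrite <- sigma_hom, (m1 HT); reflexivity).
    apply (f_equal g) in E. rewrite !Hg in E. exact E. }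
  assert (sK : forall u x, sigma u (sigma (invT u) x) = x).
  { intros u x. rewrite <- sigma_hom, (mV HT), sid. reflexivity. }
  assert (sK' : forall u x, sigma (invT u) (sigma u x) = x).
  { intros u x. rewrite <- sigma_hom, (Vm HT), sid. reflexivity. }
  assert (sadd : forall u a b, sigma u (addS a b) = addS (sigma u a) (sigma u b)).
  { intro u. destruct (sigma_aut u) as [_ [Ha _]]. exact Ha. }
  assert (smul : forall u a b, sigma u (mulS a b) = mulS (sigma u a) (sigma u b)).
  { intro u. destruct (sigma_aut u) as [_ [_ Hm]]. exact Hm. }
  assert (sinv : forall u a, sigma u (invS a) = invS (sigma u a)).
  { intros u a. apply (inv_uniq HS). rewrite <- smul, (mV HS), s1. reflexivity. }
  assert (HB : is_left_semibrace (addB addS addT delta) (mulB mulS mulT sigma)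
                 (invB invS invT sigma) (oneS, oneT)).
  { constructor.
    - intros [a u] [b v] [c w]. unfold addB; cbn. f_equal.
      + apply (sb_addA HS).
      + rewrite delta_anti, delta_end. apply (sb_addA HT).
    - intros [a u] [b v] [c w]. unfold mulB; cbn. f_equal.
      + rewrite smul, sigma_hom. apply (sb_mulA HS).
      + apply (sb_mulA HT).
    - intros [a u]. unfold mulB; cbn. rewrite s1, (m1 HS), (m1 HT). reflexivity.
    - intros [a u]. unfold mulB; cbn. rewrite sid, (m1l HS), (m1l HT). reflexivity.
    - intros [a u]. unfold mulB, invB; cbn. rewrite sK, (mV HS), (mV HT). reflexivity.
    - intros [a u]. unfold mulB, invB; cbn.
      rewrite <- smul, (Vm HS), s1, (Vm HT). reflexivity.
    - intros [a u] [b v] [c w]. unfold addB, mulB, invB; cbn. f_equal.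
      + rewrite !sadd, sK. apply (sb_distr HS).
      + rewrite !sadd, sK. symmetry. apply compat. }
  apply (Q_YBE HB).
  pose proof (YBE_Q HS solS) as QS. pose proof (YBE_Q HT solT) as QT.
  intros [a u] [b v]. unfold addB, mulB; cbn.
  rewrite !H2, QT, sadd, s1, QS. reflexivity.
Qed.
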